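(* Let $q=2^m$ with $m\ge2$, and let $G=q^2{:}\mathrm{SL}_2(q)$ be the primitive affine group $N\rtimes H$, where $N=\mathbb F_q^2$ acts regularly on itself by translation and $H=\mathrm{SL}_2(q)$ acts naturally on $\mathbb F_q^2$ (degree $q^2$). Then $\kappa(G)\ge3$.
   Context: A derangement is an element fixing no point; $\kappa(G)$ is the number of conjugacy classes of $G$ consisting of derangements. *)

(* Defs.v *)
From HB Require Import structures.
From mathcomp Require Import all_boot all_order all_fingroup all_algebra.
Set Implicit Arguments. Unset Strict Implicit. Unset Printing Implicit Defensive.
Import GRing.Theory.
Local Open Scope ring_scope.

Definition derangement (T : finType) (p : {perm T}) : bool := [forall x, p x != x].

Definition kappa (T : finType) (G : {set {perm T}}) : nat :=
  #|[set C in classes G | C \subset [set p | derangement p]]|.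

Definition affine_SL2 (F : finFieldType) : {set {perm 'rV[F]_2}} :=
  [set p : {perm 'rV[F]_2} | [exists A : 'M[F]_2, exists b : 'rV[F]_2,
            (\det A == 1 :> F) && [forall v, p v == v *m A + b]]].

(* Main.v *)
Require Import Defs.
From HB Require Import structures.
From mathcomp Require Import all_boot all_order all_fingroup all_algebra.
From mathcomp Require Import ring zify.
Set Implicit Arguments. Unset Strict Implicit. Unset Printing Implicit Defensive.
Import GRing.Theory.

Section Aux.
Local Open Scope ring_scope.
Variable F : finFieldType.

Local Notation i0 := (ord0 : 'I_2).
Local Notation i1 := (ord_max : 'I_2).

Lemma mulrow2 (v : 'rV[F]_2) (M : 'M[F]_2) j :
  (v *m M) ord0 j = v ord0 i0 * M i0 j + v ord0 i1 * M i1 j.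
Proof. rewrite !mxE big_ord_recl big_ord1.
by have -> : lift ord0 ord0 = ord_max :> 'I_2 by apply: val_inj. Qed.

Definition affF (A : 'M[F]_2) (b : 'rV[F]_2) (v : 'rV[F]_2) := v *m A + b.

Lemma affF_inj A b : A \in unitmx -> injective (affF A b).
Proof.
move=> uA v w; rewrite /affF => /addIr /(congr1 (mulmx^~ (invmx A))).
by rewrite !mulmxK.
Qed.

Definition mkaff (A : 'M[F]_2) (b : 'rV[F]_2) (H : A \in unitmx) : {perm 'rV[F]_2} := perm (@affF_inj A b H).

Lemma mkaffE A b H v : @mkaff A b H v = v *m A + b.
Proof. by rewrite permE. Qed.

Lemma mkaff_in A b H : \det A = 1 -> @mkaff A b H \in affine_SL2 F.
Proof.
move=> dA; rewrite inE; apply/existsP; exists A; apply/existsP; exists b.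
by rewrite dA eqxx /=; apply/forallP => v; rewrite mkaffE.
Qed.

Definition tA : 'M[F]_2 :=
  \matrix_(i < 2, j < 2) (if (i == i1) && (j == i0) then 0 else 1).

Lemma tAE i j : tA i j = (if (i == i1) && (j == i0) then 0 else 1).
Proof. by rewrite mxE. Qed.

Lemma det_tA : \det tA = 1.
Proof.
rewrite -det_tr det_trig.
  by rewrite big_ord_recl big_ord1 !mxE /= mulr1.
apply/is_trig_mxP => i j lt; rewrite !mxE.
by case: i j lt => [[|[|i]] Hi] [[|[|j]] Hj].
Qed.

Lemma unit_tA : tA \in unitmx.
Proof. by rewrite unitmxE det_tA unitr1. Qed.

Lemma unit_1 : (1%:M : 'M[F]_2) \in unitmx.
Proof. by rewrite unitmx1. Qed.

Definition e0 : 'rV[F]_2 := delta_mx ord0 i0.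

Lemma e0E j : e0 ord0 j = (j == i0)%:R.
Proof. by rewrite mxE eqxx. Qed.

Definition tau := @mkaff 1%:M e0 unit_1.
Definition g (a : F) := @mkaff tA (a *: e0) unit_tA.

Lemma derangement_conj (x y : {perm 'rV[F]_2}) :
  derangement x -> derangement (x ^ y).
Proof.
move=> /forallP Hx; apply/forallP => z; rewrite conjgE !permM.
apply/eqP => E; have := Hx ((y^-1)%g z).
by rewrite -{2}E permK eqxx.
Qed.

Lemma class_der (x : {perm 'rV[F]_2}) (G : {set {perm 'rV[F]_2}}) :
  derangement x -> (x ^: G)%g \subset [set p | derangement p].
Proof.
move=> dx; apply/subsetP => p /imsetP [y _ ->]; rewrite inE.
exact: derangement_conj.
Qed.

Lemma der_tau : derangement tau.
Proof.
apply/forallP => v; rewrite mkaffE mulmx1; apply/eqP => /(congr1 (fun w : 'rV[F]_2 => w ord0 i0)).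
rewrite mxE e0E eqxx => /eqP.
by rewrite -subr_eq0 addrAC subrr add0r oner_eq0.
Qed.

Lemma der_g a : a != 0 -> derangement (g a).
Proof.
move=> a0; apply/forallP => v; rewrite mkaffE; apply/eqP => /(congr1 (fun w : 'rV[F]_2 => w ord0 i0)).
rewrite mxE mulrow2 !tAE !mxE eqxx /= mulr1 mulr0 addr0 mulr1 => /eqP.
by rewrite -subr_eq0 addrAC subrr add0r (negbTE a0).
Qed.

Lemma one_in : (1%g : {perm 'rV[F]_2}) \in affine_SL2 F.
Proof.
rewrite inE; apply/existsP; exists 1%:M; apply/existsP; exists 0.
by rewrite det1 eqxx /=; apply/forallP => v; rewrite perm1 mulmx1 addr0.
Qed.

Lemma self_in_class (x : {perm 'rV[F]_2}) : x \in (x ^: affine_SL2 F)%g.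
Proof. by apply/imsetP; exists 1%g; [exact: one_in | rewrite conjg1]. Qed.

Lemma aff_coord (M : 'M[F]_2) (t v : 'rV[F]_2) j :
  (v *m M + t) ord0 j = v ord0 i0 * M i0 j + v ord0 i1 * M i1 j + t ord0 j.
Proof. by rewrite mxE mulrow2. Qed.

Lemma conj_rel (x y : {perm 'rV[F]_2}) (G : {set {perm 'rV[F]_2}}) :
  y \in (x ^: G)%g -> exists2 h, h \in G & forall v, y (h v) = h (x v).
Proof.
case/imsetP => h hG ->; exists h => // v.
by rewrite conjgE !permM permK.
Qed.

Lemma in_aff (h : {perm 'rV[F]_2}) : h \in affine_SL2 F ->
  exists M t, \det M = 1 /\ forall v, h v = v *m M + t.
Proof.
rewrite inE => /existsP [M /existsP [t /andP [/eqP dM /forallP Hh]]].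
by exists M, t; split => // v; apply/eqP.
Qed.

Definition e1 : 'rV[F]_2 := delta_mx ord0 i1.

Lemma alg (a c p q r s t0 t1 : F) :
  (0 * p + 0 * r + t0) * 1 + (0 * q + 0 * s + t1) * 0 + c * 1 =
  (0 * 1 + 0 * 0 + a * 1) * p + (0 * 1 + 0 * 1 + a * 0) * r + t0 ->
  (0 * p + 0 * r + t0) * 1 + (0 * q + 0 * s + t1) * 1 + c * 0 =
  (0 * 1 + 0 * 0 + a * 1) * q + (0 * 1 + 0 * 1 + a * 0) * s + t1 ->
  (1 * p + 0 * r + t0) * 1 + (1 * q + 0 * s + t1) * 0 + c * 1 =
  (1 * 1 + 0 * 0 + a * 1) * p + (1 * 1 + 0 * 1 + a * 0) * r + t0 ->
  (1 * p + 0 * r + t0) * 1 + (1 * q + 0 * s + t1) * 1 + c * 0 =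
  (1 * 1 + 0 * 0 + a * 1) * q + (1 * 1 + 0 * 1 + a * 0) * s + t1 ->
  [/\ r = 0, s = p & c = a * p].
Proof.
rewrite !(mul0r, mul1r, mulr0, mulr1, add0r, addr0).
rewrite [a * p + t0]addrC => /addrI hc /addIr ht0 H3 H4.
have hr : r = ((1 + a) * p + r + t0) - (p + t0 + a * p) by ring.
rewrite -hc -H3 subrr in hr.
have hs : s = ((1 + a) * q + s + t1) - (p + a * q + (q + t1)) + p by ring.
by rewrite -ht0 -H4 subrr add0r in hs.
Qed.

Lemma det_ut (M : 'M[F]_2) : M i1 i0 = 0 -> \det M = M i0 i0 * M i1 i1.
Proof.
move=> r0; rewrite -det_tr det_trig.
  by rewrite big_ord_recl big_ord1 !mxE; have -> : lift ord0 ord0 = i1 by apply: val_inj.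
apply/is_trig_mxP => i j; rewrite mxE.
by case: i j => [[|[|i]] Hi] [[|[|j]] Hj] //= _; rewrite -r0; congr (M _ _); apply: val_inj.
Qed.

Lemma g_g a c : g c \in (g a ^: affine_SL2 F)%g -> c ^+ 2 = a ^+ 2.
Proof.
case/conj_rel => h /in_aff [M [t [dM hE]]] E.
have E0 := E 0; have E1 := E e0.
rewrite !hE !mkaffE in E0 E1.
have C00 := congr1 (fun w : 'rV[F]_2 => w ord0 i0) E0.
have C01 := congr1 (fun w : 'rV[F]_2 => w ord0 i1) E0.
have C10 := congr1 (fun w : 'rV[F]_2 => w ord0 i0) E1.
have C11 := congr1 (fun w : 'rV[F]_2 => w ord0 i1) E1.
move: C00 C01 C10 C11 => /=; rewrite !aff_coord !mxE /=.
move=> C00 C01 C10 C11; case: (alg C00 C01 C10 C11) => r0 sp hc.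
rewrite det_ut // sp in dM.
by rewrite hc exprMn [M _ _ ^+ 2]expr2 dM mulr1.
Qed.

Lemma alg2 (a p q r s t0 t1 : F) :
  (0 * p + 0 * r + t0) * 1 + (0 * q + 0 * s + t1) * 1 + a * 0 =
  (0 * 1 + 0 * 0 + 1) * q + (0 * 0 + 0 * 1 + 0) * s + t1 ->
  (1 * p + 0 * r + t0) * 1 + (1 * q + 0 * s + t1) * 1 + a * 0 =
  (1 * 1 + 0 * 0 + 1) * q + (1 * 0 + 0 * 1 + 0) * s + t1 ->
  (0 * p + 1 * r + t0) * 1 + (0 * q + 1 * s + t1) * 1 + a * 0 =
  (0 * 1 + 1 * 0 + 1) * q + (0 * 0 + 1 * 1 + 0) * s + t1 ->
  p = 0 /\ r = 0.
Proof.
rewrite !(mul0r, mul1r, mulr0, mulr1, add0r, addr0) => /addIr ht0 H1 H2.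
have hp : p = ((p + t0 + (q + t1)) - ((1 + 1) * q + t1)) - (t0 - q) by ring.
have hr : r = ((r + t0 + (s + t1)) - (q + s + t1)) - (t0 - q) by ring.
by rewrite H1 ht0 !subrr ?subr0 in hp; rewrite H2 ht0 !subrr ?subr0 in hr.
Qed.

Lemma tau_g a : g a \in (tau ^: affine_SL2 F)%g -> False.
Proof.
case/conj_rel => h /in_aff [M [t [dM hE]]] E.
have E0 := E 0; have E1 := E e0; have E2 := E e1.
rewrite !hE !mkaffE in E0 E1 E2.
have C0 := congr1 (fun w : 'rV[F]_2 => w ord0 i1) E0.
have C1 := congr1 (fun w : 'rV[F]_2 => w ord0 i1) E1.
have C2 := congr1 (fun w : 'rV[F]_2 => w ord0 i1) E2.
move: C0 C1 C2 => /=; rewrite !aff_coord !mxE /=.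
move=> C0 C1 C2; case: (alg2 C0 C1 C2) => p0 r0.
by move: dM; rewrite det_ut // p0 mul0r => /eqP; rewrite eq_sym oner_eq0.
Qed.
End Aux.

Lemma exists_c (F : finFieldType) : (4 <= #|F|)%N ->
  exists c : F, (c != 0)%R && (c ^+ 2 != 1)%R.
Proof.
move=> F4.
case: (pickP [predC [set 0%R; 1%R; (-1)%R] : {set F}]) => [c /= Hc | H].
  exists c; move: Hc; rewrite !inE sqrf_eq1.
  by case: (c == 0%R); case: (c == 1%R); case: (c == (-1)%R).
have : (#|[set: F]| <= #|([set 0%R; 1%R; (-1)%R] : {set F})|)%N.
  apply: subset_leq_card; apply/subsetP => x _; by have := H x; rewrite /= => /negbFE.
rewrite cardsT => le.
have : (#|F| <= 3)%N.
  apply: (leq_trans le); rewrite !cardsU !cards1; lia.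
by rewrite leqNgt (leq_trans _ F4).
Qed.

Theorem lemma4p7 (F : finFieldType) (m : nat) :
  (2 <= m)%N -> #|F| = (2 ^ m)%N -> (3 <= kappa (affine_SL2 F))%N.
Proof.
move=> m2 cF.
have F4 : (4 <= #|F|)%N by rewrite cF -[4%N]/(2 ^ 2)%N leq_pexp2l.
have [c /andP [c0 c2]] := exists_c F4.
set G := affine_SL2 F.
have tauG : tau F \in G by apply: mkaff_in; rewrite det1.
have gG a : g a \in G by apply: mkaff_in; rewrite det_tA.
have g1 : (1 != 0 :> F)%R by rewrite oner_eq0.
set X := (tau F ^: G)%g; set Y := (g 1%R ^: G)%g; set Z := (g c ^: G)%g.
have inS (x : {perm 'rV[F]_2}) : x \in G -> derangement x ->
   (x ^: G)%g \in [set C in classes G | C \subset [set p | derangement p]].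
  by move=> xG dx; rewrite inE mem_classes //= class_der.
have XY : X != Y.
  by apply/eqP => e; apply: (@tau_g F 1%R); rewrite -/X e self_in_class.
have XZ : X != Z.
  by apply/eqP => e; apply: (@tau_g F c); rewrite -/X e self_in_class.
have YZ : Y != Z.
  apply/eqP => e; move/negP: c2; apply; apply/eqP.
  by rewrite (@g_g F 1%R c) ?expr1n // -/Y e self_in_class.
rewrite /kappa; apply: (@leq_trans #|X |: (Y |: [set Z])|).
  by rewrite !cardsU1 cards1 !inE (negbTE XY) (negbTE XZ) YZ.
apply: subset_leq_card; apply/subsetP => C; rewrite !inE => /or3P [] /eqP ->.
- by rewrite /X mem_classes // class_der //; exact: der_tau.
- by rewrite ?/Y ?/Z mem_classes ?gG // class_der //; exact: der_g.
- by rewrite ?/Y ?/Z mem_classes ?gG // class_der //; exact: der_g.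
Qed.
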